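(* Let $p_{NS}\in(0,1)$ and let $P$ be a semi-distribution on a finite set $\mathcal{I}$ with $a(P)>p_{NS}$. Consider minimizing $\mathrm{KL}_b(P\|Q)$ over the set $S$ of semi-distributions $Q$ with $a(Q)\le a(P)$ and $\sup(Q)\subseteq\sup(P)$. Then: (1) For any $Q_1\in S$ having an item $i$ with $Q_1(i)\in(0,p_{NS}]$, there is $Q_2\in S$ with $Q_2(j)>p_{NS}$ for all $j\in\sup(Q_2)$ and $\mathrm{KL}_b(P\|Q_2)<\mathrm{KL}_b(P\|Q_1)$. Consequently, it suffices to minimize over $S_2=\{Q\in S: a(Q)=a(P),\ Q(j)>p_{NS}\ \forall j\in\sup(Q)\}$, and $S_2$ is non-empty. (2) The set $S^*\subseteq S_2$ of minimizers of $\mathrm{KL}_b(P\|\cdot)$ is non-empty, and for every $Q^*\in S^*$ there is a multiple $r\ge1$ with $Q^*(i)=r\,P(i)$ for all $i\in\sup(Q^* )$. (3) For any minimizer $Q^*$ and any items $i,j$ with $P(i)<P(j)$: if $Q^*(i)>0$ then $Q^*(j)>0$ (and then $Q^*(j)>Q^*(i)$).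
   Context: A semi-distribution on $\mathcal{I}$ is $W:\mathcal{I}\to[0,1]$ with $a(W):=\sum_iW(i)\le1$ and support $\sup(W)=\{i:W(i)>0\}$. A semi-distribution $P$ is called non-degenerate with respect to $p_{NS}$ if $a(P)>p_{NS}$. Bounded KL: $\mathrm{KL}_b(P\|Q):=\sum_{i\in\sup(P)}P(i)\ln\frac{P(i)}{\max(Q(i),p_{NS})}$. *)

(* Defs.v *)
From HB Require Import structures.
From mathcomp Require Import all_boot all_order all_algebra.
From mathcomp Require Import reals exp.
Set Implicit Arguments. Unset Strict Implicit. Unset Printing Implicit Defensive.
Import Order.TTheory GRing.Theory Num.Theory.
Local Open Scope ring_scope.

Section Defs.
Variables (R : realType) (I : finType).

Definition semidist (W : I -> R) : Prop :=
  (forall i, 0 <= W i <= 1) /\ \sum_(i : I) W i <= 1.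

Definition mass (W : I -> R) : R := \sum_(i : I) W i.

Definition KLb (pNS : R) (P Q : I -> R) : R :=
  \sum_(i : I | 0 < P i) P i * ln (P i / Num.max (Q i) pNS).

Definition inS (P Q : I -> R) : Prop :=
  semidist Q /\ mass Q <= mass P /\ (forall i, 0 < Q i -> 0 < P i).

Definition inS2 (pNS : R) (P Q : I -> R) : Prop :=
  inS P Q /\ mass Q = mass P /\ (forall j, 0 < Q j -> pNS < Q j).

Definition is_minimizer (pNS : R) (P Q : I -> R) : Prop :=
  inS P Q /\ (forall Q', inS P Q' -> KLb pNS P Q <= KLb pNS P Q').

End Defs.

(* Main.v *)
Require Import Defs.
From HB Require Import structures.
From mathcomp Require Import all_boot all_order all_algebra.
From mathcomp Require Import reals exp.
From mathcomp Require Import ring lra.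
Set Implicit Arguments. Unset Strict Implicit. Unset Printing Implicit Defensive.
Import Order.TTheory GRing.Theory Num.Theory.
Local Open Scope ring_scope.

Section Aux.
Variable R : realType.

Lemma ln_lt_sub1 (y : R) : 0 < y -> y != 1 -> ln y < y - 1.
Proof.
move=> y0 y1.
set z := sequences.expR (ln y / 2).
have z0 : 0 < z by rewrite expR_gt0.
have zz : z * z = y by rewrite /z -expRD -splitr lnK // posrE.
have z1 : z != 1 by apply: contra y1 => /eqP z1; rewrite -zz z1 mulr1.
have lnz : ln y = ln z *+ 2 by rewrite -zz -expr2 lnXn.
have h : ln z <= z - 1.
  have := @le_ln1Dx R (z - 1); rewrite (_ : 1 + (z - 1) = z); [apply; lra | ring].
have sq : 0 < (z - 1) ^+ 2 by rewrite lt0r sqr_ge0 sqrf_eq0 subr_eq0 z1.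
rewrite lnz -zz; move: sq h; rewrite mulr2n; nra.
Qed.

Lemma gibbs_pt (p q a m : R) : 0 < p -> 0 < q -> 0 < a -> 0 < m ->
  p - q * a / m <= p * ln (p / q) - p * ln (a / m) /\
  (q * a != p * m -> p - q * a / m < p * ln (p / q) - p * ln (a / m)).
Proof.
move=> p0 q0 a0 m0.
set y := q * a / (p * m).
have y0 : 0 < y by rewrite /y divr_gt0 // mulr_gt0.
have e : a / m = p / q * y.
  rewrite /y; field; rewrite ?lt0r_neq0 //; apply/andP; split; exact: lt0r_neq0.
rewrite e.
have -> : p * ln (p / q) - p * ln (p / q * y) = - (p * ln y).
  by rewrite [ln (p / q * y)]lnM ?posrE ?y0 ?divr_gt0 // mulrDr opprD addrA subrr add0r.
have e2 : p - q * a / m = - (p * (y - 1)).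
  rewrite /y; field; apply/andP; split; exact: lt0r_neq0.
rewrite e2.
split.
  rewrite lerN2 ler_pM2l //.
  have := @le_ln1Dx R (y - 1); rewrite (_ : 1 + (y - 1) = y); [apply; lra | ring].
move=> ne; rewrite ltrN2 ltr_pM2l //; apply: ln_lt_sub1 => //.
apply: contra ne => /eqP y1; apply/eqP.
have : q * a = y * (p * m) by rewrite /y divfK // mulf_neq0 // lt0r_neq0.
by rewrite y1 mul1r.
Qed.

End Aux.

Lemma sum_two (R : numDomainType) (I : finType) (h : I -> R) i j :
  i != j -> (forall k, k != i -> k != j -> h k = 0) -> \sum_k h k = h i + h j.
Proof.
move=> ij H; rewrite (bigD1 i) //= (bigD1 j) /=; last by rewrite eq_sym.
rewrite big1 ?addr0 ?addrA // => k /andP [ki kj]; exact: H.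
Qed.

Section Main.
Variables (R : realType) (I : finType) (pNS : R) (P : I -> R).
Hypotheses (hp0 : 0 < pNS) (hp1 : pNS < 1) (hP : semidist P) (hM : pNS < mass P).

Definition M := mass P.
Definition supp : {set I} := [set k | 0 < P k].
Definition PA (T : {set I}) := \sum_(k in T) P k.
Definition tt (Q : I -> R) k :=
  if 0 < P k then P k * ln (P k / Num.max (Q k) pNS) else 0.
Definition ft (T : {set I}) k :=
  if 0 < P k then (if k \in T then P k * ln (PA T / M) else P k * ln (P k / pNS))
  else 0.
Definition f T := \sum_k ft T k.
Definition cand (T : {set I}) k := if k \in T then M / PA T * P k else 0.
Definition TQ (Q : I -> R) := [set k | pNS < Q k].
Definition dd (Q : I -> R) k :=
  if k \in TQ Q then P k - Q k * PA (TQ Q) / M else 0.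

Lemma P_ge0 k : 0 <= P k.
Proof. by case: hP => /(_ k) /andP []. Qed.

Lemma M_gt0 : 0 < M.
Proof. exact: lt_trans hp0 hM. Qed.

Lemma M_le1 : M <= 1.
Proof. by case: hP. Qed.

Lemma PA_ge (T : {set I}) k : k \in T -> P k <= PA T.
Proof.
move=> kT; rewrite /PA (big_setD1 k) //= lerDl sumr_ge0 // => l _; exact: P_ge0.
Qed.

Lemma PA_leM (T : {set I}) : PA T <= M.
Proof.
rewrite /PA /M /mass big_mkcond /=; apply: ler_sum => k _.
by case: ifP => // _; exact: P_ge0.
Qed.

Lemma PA_gt0 (T : {set I}) : T \subset supp -> T != set0 -> 0 < PA T.
Proof.
move=> sT /set0Pn [k kT]; have := subsetP sT k kT; rewrite inE => Pk.
exact: lt_le_trans Pk (PA_ge kT).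
Qed.

Lemma exists_supp : exists j, 0 < P j.
Proof.
case: (pickP (fun j => 0 < P j)) => [j Pj|H]; first by exists j.
have : M <= 0 by rewrite /M /mass; apply: sumr_le0 => k _; rewrite leNgt H.
by rewrite leNgt M_gt0.
Qed.

Lemma KLbE Q : KLb pNS P Q = \sum_k tt Q k.
Proof. by rewrite /KLb big_mkcond. Qed.

Lemma cand_inS (T : {set I}) : T \subset supp -> T != set0 ->
  inS P (cand T) /\ mass (cand T) = M.
Proof.
move=> sT nT; have A0 := PA_gt0 sT nT.
have mc : mass (cand T) = M.
  rewrite /mass /cand -big_mkcond /= -mulr_sumr -/(PA T) divfK //.
  exact: lt0r_neq0.
split=> //; split; last split.
- split; last by rewrite -/(mass _) mc M_le1.
  move=> k; rewrite /cand; case: ifP => kT; last by rewrite lexx ler01.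
  apply/andP; split.
    by apply: mulr_ge0; [apply: divr_ge0; apply: ltW => //; exact: M_gt0 | exact: P_ge0].
  apply: le_trans M_le1; rewrite -mulrA ger_pMr ?M_gt0 //.
  by rewrite mulrC ler_pdivrMr // mul1r PA_ge.
- by rewrite mc.
- move=> k; rewrite /cand; case: ifP => kT; last by rewrite ltxx.
  by move=> _; have := subsetP sT k kT; rewrite inE.
Qed.

Lemma cand_le (T : {set I}) : T \subset supp -> T != set0 -> KLb pNS P (cand T) <= f T.
Proof.
move=> sT nT; have A0 := PA_gt0 sT nT.
rewrite KLbE /f; apply: ler_sum => k _; rewrite /tt /ft /cand.
case: ifP => // Pk; case: ifP => kT; last first.
  by rewrite max_r // ltW.
have c0 : 0 < M / PA T * P k by rewrite mulr_gt0 ?divr_gt0 // M_gt0.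
rewrite ler_wpM2l ?P_ge0 // ler_ln ?posrE; first last.
- by rewrite divr_gt0 ?M_gt0.
- by rewrite divr_gt0 // lt_max c0.
have -> : PA T / M = P k / (M / PA T * P k).
  field; rewrite !lt0r_neq0 ?M_gt0 //.
by rewrite ler_pM2l // lef_pV2 ?posrE ?le_max ?lexx // ?lt_max ?c0.
Qed.


Lemma TQ_sub Q : inS P Q -> TQ Q \subset supp.
Proof.
move=> [_ [_ H]]; apply/subsetP => k; rewrite !inE => h.
by apply: H; exact: lt_trans hp0 h.
Qed.

Lemma Q_ge0 Q : inS P Q -> forall k, 0 <= Q k.
Proof. by case=> [[H _] _] k; case/andP: (H k). Qed.

Lemma lower_pt Q k : inS P Q ->
  dd Q k <= tt Q k - ft (TQ Q) k /\
  (k \in TQ Q -> Q k * PA (TQ Q) != P k * M -> dd Q k < tt Q k - ft (TQ Q) k).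
Proof.
move=> HQ; rewrite /dd /tt /ft.
case: (boolP (k \in TQ Q)) => kT.
- have Pk : 0 < P k by have := subsetP (TQ_sub HQ) k kT; rewrite inE.
  have Qk : pNS < Q k by move: kT; rewrite inE.
  have A0 : 0 < PA (TQ Q).
    by apply: PA_gt0 (TQ_sub HQ) _; apply/set0Pn; exists k.
  rewrite Pk (max_l (ltW Qk)).
  have [h1 h2] := gibbs_pt Pk (lt_trans hp0 Qk) A0 M_gt0.
  split; first exact: h1.
  by move=> _ ne; apply: h2.
- have Qk : Q k <= pNS by move: kT; rewrite inE; case: ltP.
  rewrite max_r //; case: ifP => _; rewrite subrr; split=> //.
Qed.

Lemma sumQT_le Q : inS P Q -> \sum_(k in TQ Q) Q k <= M.
Proof.
move=> HQ; apply: le_trans (proj1 (proj2 HQ)).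
rewrite /mass big_mkcond /=; apply: ler_sum => k _.
by case: ifP => // _; exact: Q_ge0.
Qed.

Lemma sum_dd Q : inS P Q ->
  \sum_k dd Q k = PA (TQ Q) * (M - \sum_(k in TQ Q) Q k) / M.
Proof.
move=> HQ; rewrite /dd -big_mkcond /= sumrB -/(PA _) -!mulr_suml.
have := M_gt0 => M0.
by field; exact: lt0r_neq0.
Qed.

Lemma PA_ge0 (T : {set I}) : 0 <= PA T.
Proof. by apply: sumr_ge0 => k _; exact: P_ge0. Qed.

Lemma dd_ge0 Q : inS P Q -> 0 <= \sum_k dd Q k.
Proof.
move=> HQ; rewrite sum_dd //; apply: mulr_ge0; last by rewrite invr_ge0 ltW // M_gt0.
by apply: mulr_ge0; [exact: PA_ge0 | rewrite subr_ge0 sumQT_le].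
Qed.

Lemma f_le_KLb Q : inS P Q -> f (TQ Q) <= KLb pNS P Q.
Proof.
move=> HQ; rewrite KLbE /f -subr_ge0 -sumrB; apply: le_trans (dd_ge0 HQ) _.
by apply: ler_sum => k _; exact: (lower_pt k HQ).1.
Qed.

Lemma f_remove (T : {set I}) k : T \subset supp -> k \in T ->
  M * P k <= pNS * PA T -> f (T :\ k) <= f T.
Proof.
move=> sT kT hk; rewrite /f; apply: ler_sum => l _; rewrite /ft.
case: ifP => // Pl.
have A0 : 0 < PA T by apply: PA_gt0 sT _; apply/set0Pn; exists k.
rewrite in_setD1.
case: (eqVneq l k) => [elk|lk] /=; first subst l.
  rewrite kT ler_wpM2l ?P_ge0 // ler_ln ?posrE ?divr_gt0 ?M_gt0 ?Pl //.
  rewrite ler_pdivrMr // mulrAC ler_pdivlMr ?M_gt0 //.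
  by rewrite mulrC (mulrC (PA T)).
case: ifP => lT //=.
have lT' : l \in T :\ k by rewrite in_setD1 lk lT.
have A1 : 0 < PA (T :\ k) := lt_le_trans Pl (PA_ge lT').
rewrite ler_wpM2l ?P_ge0 // ler_ln ?posrE ?divr_gt0 ?M_gt0 //.
rewrite ler_pM2r ?invr_gt0 ?M_gt0 //.
by rewrite [X in _ <= X](big_setD1 k) //= lerDr P_ge0.
Qed.

Lemma f_single j : 0 < P j -> f [set j] < f set0.
Proof.
move=> Pj; rewrite /f (bigD1 j) //= [X in _ < X](bigD1 j) //=; apply: ltr_leD.
  rewrite /ft Pj in_set1 eqxx in_set0 /PA big_set1.
  rewrite ltr_pM2l // ltr_ln ?posrE ?divr_gt0 ?M_gt0 //.
  by rewrite ltr_pM2l // ltf_pV2 ?posrE ?M_gt0.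
apply: ler_sum => l hl; rewrite /ft in_set1 (negbTE hl) in_set0.
by case: ifP.
Qed.

Lemma exists_opt : exists Ts : {set I},
  [/\ Ts \subset supp, Ts != set0,
      (forall k, k \in Ts -> pNS < M / PA Ts * P k) &
      (forall T : {set I}, T \subset supp -> f Ts <= f T)].
Proof.
have [T0 sT0 minT0] : exists2 T0 : {set I}, T0 \subset supp &
    forall T : {set I}, T \subset supp -> f T0 <= f T.
  case: (@arg_minP _ _ _ supp (fun T : {set I} => T \subset supp) f (subxx _)).
  by move=> T0 sT0 h; exists T0.
pose Pm := fun T : {set I} => (T \subset supp) && (f T == f T0).
case: (@arg_minnP _ T0 Pm (fun T : {set I} => #|T|)).
  by rewrite /Pm sT0 eqxx.
move=> Ts /andP [sTs /eqP fTs] hcard.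
have fTs_min : forall T : {set I}, T \subset supp -> f Ts <= f T.
  by move=> T sT; rewrite fTs minT0.
exists Ts; split => //.
- apply/negP => /eqP Ts0; have [j Pj] := exists_supp.
  have : f [set j] < f Ts by rewrite Ts0 f_single.
  by rewrite ltNge fTs_min // sub1set inE.
- move=> k kTs; rewrite ltNge; apply/negP => hk.
  have A0 : 0 < PA Ts by apply: PA_gt0 sTs _; apply/set0Pn; exists k.
  have hk' : M * P k <= pNS * PA Ts.
    by move: hk; rewrite mulrAC ler_pdivrMr.
  have sub' : Ts :\ k \subset supp by apply: subset_trans sTs; apply: subD1set.
  have hle := f_remove sTs kTs hk'.
  have : Pm (Ts :\ k) by rewrite /Pm sub' -fTs eq_le hle fTs_min.
  move/hcard; rewrite [X in (X <= _)%N](cardsD1 k) kTs /=.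
  by rewrite add1n ltnn.
Qed.


Lemma min_char Q : is_minimizer pNS P Q ->
  [/\ TQ Q != set0, (forall k, k \notin TQ Q -> Q k = 0),
      (forall k, k \in TQ Q -> Q k = M / PA (TQ Q) * P k) & mass Q = M].
Proof.
case=> HQ Qmin.
have [Ts [sTs nTs feas opt]] := exists_opt.
have [cS _] := cand_inS sTs nTs.
have sT := TQ_sub HQ.
set T := TQ Q.
have hKle : forall T' : {set I}, T' \subset supp -> KLb pNS P Q <= f T'.
  move=> T' sT'; exact: le_trans (Qmin _ cS) (le_trans (cand_le sTs nTs) (opt _ sT')).
have hK := hKle _ sT.
have hL := f_le_KLb HQ.
have nT : T != set0.
  apply/negP => /eqP T0.
  have [j Pj] := exists_supp.
  have : f [set j] < f T by rewrite T0 f_single.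
  have h1 : KLb pNS P Q <= f [set j] by apply: hKle; rewrite sub1set inE.
  by rewrite ltNge (le_trans hL h1).
have A0 : 0 < PA T := PA_gt0 sT nT.
have g0 : forall k, 0 <= tt Q k - ft T k - dd Q k.
  by move=> k; rewrite subr_ge0; exact: (lower_pt k HQ).1.
have sg : \sum_k (tt Q k - ft T k - dd Q k) = (KLb pNS P Q - f T) - \sum_k dd Q k.
  by rewrite !sumrB KLbE.
have d0 := dd_ge0 HQ.
have K0 : KLb pNS P Q - f T <= 0 by rewrite subr_le0.
have Sg0 : \sum_k (tt Q k - ft T k - dd Q k) = 0.
  apply/eqP; rewrite eq_le; apply/andP; split; last by apply: sumr_ge0 => k _; exact: g0.
  rewrite sg; lra.
have Sd0 : \sum_k dd Q k = 0.
  move: Sg0; rewrite sg => h; lra.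
have prop : forall k, k \in T -> Q k = M / PA T * P k.
  move=> k kT.
  have gk : tt Q k - ft T k - dd Q k = 0.
    exact: (@psumr_eq0P _ _ _ _ (fun i _ => g0 i) Sg0 k isT).
  case: (eqVneq (Q k * PA T) (P k * M)) => [e|ne].
    apply: (mulIf (lt0r_neq0 A0)); rewrite e; field.
    exact: lt0r_neq0.
  have := (lower_pt k HQ).2 kT ne.
  by rewrite -subr_gt0 gk ltxx.
have BM : \sum_(k in T) Q k = M.
  move: Sd0; rewrite sum_dd //; move/eqP.
  rewrite !mulf_eq0 invr_eq0 (negbTE (lt0r_neq0 A0)) (negbTE (lt0r_neq0 M_gt0)).
  by rewrite /= orbF subr_eq0 => /eqP ->.
have off : forall k, k \notin T -> Q k = 0.
  have hm : mass Q <= M := proj1 (proj2 HQ).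
  have h : \sum_(k | k \notin T) Q k = 0.
    apply/eqP; rewrite eq_le sumr_ge0 ?andbT; last by move=> k _; exact: Q_ge0 HQ k.
    move: hm; rewrite /mass (bigID (fun k => k \in T)) /= BM => hm; lra.
  move=> k kT; exact: (psumr_eq0P (fun i _ => Q_ge0 HQ i) h kT).
have mQ : mass Q = M.
  rewrite /mass (bigID (fun k => k \in T)) /= BM big1 ?addr0 // => k kT; exact: off.
by split.
Qed.

Lemma swap_contra Q i j : is_minimizer pNS P Q -> P i < P j -> pNS < Q i ->
  Q j = 0 -> False.
Proof.
case=> HQ Qmin hij hQi hQj.
have Qi0 : 0 < Q i := lt_trans hp0 hQi.
have Pi : 0 < P i by case: HQ => _ [_ H]; exact: H.
have Pj : 0 < P j := lt_trans Pi hij.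
have ij : i != j by apply: contraTneq hij => ->; rewrite ltxx.
pose Q' := fun k => if k == j then Q i else if k == i then 0 else Q k.
have Q'i : Q' i = 0 by rewrite /Q' (negbTE ij) eqxx.
have Q'j : Q' j = Q i by rewrite /Q' eqxx.
have Q'k : forall k, k != i -> k != j -> Q' k = Q k.
  by move=> k ki kj; rewrite /Q' (negbTE ki) (negbTE kj).
have mQ' : mass Q' = mass Q.
  apply/eqP; rewrite -subr_eq0; apply/eqP; rewrite /mass -sumrB.
  rewrite (@sum_two _ _ (fun k => Q' k - Q k) i j ij); last first.
    by move=> k ki kj; rewrite Q'k // subrr.
  by rewrite /= Q'i Q'j hQj; ring.
have HQ' : inS P Q'.
  have hm := proj1 (proj2 HQ).
  split; [split|split].
  - move=> k; rewrite /Q'; case: ifP => _.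
      by case: HQ => [[H _] _]; exact: H.
    case: ifP => _; first by rewrite lexx ler01.
    by case: HQ => [[H _] _]; exact: H.
  - rewrite -/(mass Q') mQ'; exact: le_trans hm M_le1.
  - by rewrite mQ'.
  - move=> k; rewrite /Q'; case: ifP => [/eqP -> //|_].
    case: ifP => _; first by rewrite ltxx.
    by case: HQ => _ [_ H]; exact: H.
have : KLb pNS P Q' < KLb pNS P Q.
  rewrite -subr_lt0 !KLbE -sumrB.
  rewrite (@sum_two _ _ (fun k => tt Q' k - tt Q k) i j ij); last first.
    by move=> k ki kj; rewrite /tt Q'k // subrr.
  rewrite /= /tt Pi Pj Q'i Q'j hQj (max_r (ltW hp0)) (max_l (ltW hQi)).
  rewrite !ln_div ?posrE //.
  have -> : P i * (ln (P i) - ln pNS) - P i * (ln (P i) - ln (Q i)) +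
    (P j * (ln (P j) - ln (Q i)) - P j * (ln (P j) - ln pNS)) =
    (P i - P j) * (ln (Q i) - ln pNS) by ring.
  rewrite pmulr_llt0 ?subr_lt0 // subr_gt0 ltr_ln ?posrE //.
by rewrite ltNge Qmin.
Qed.

Lemma main_sec :
  ((forall Q1 : I -> R, inS P Q1 -> (exists i, 0 < Q1 i <= pNS) ->
      exists Q2 : I -> R, inS P Q2 /\ (forall j, 0 < Q2 j -> pNS < Q2 j) /\
        KLb pNS P Q2 < KLb pNS P Q1)
   /\ (forall Q1 : I -> R, inS P Q1 ->
        exists Q2 : I -> R, inS2 pNS P Q2 /\ KLb pNS P Q2 <= KLb pNS P Q1)
   /\ (exists Q : I -> R, inS2 pNS P Q))
  /\
  ((exists Q : I -> R, is_minimizer pNS P Q)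
   /\ (forall Q : I -> R, is_minimizer pNS P Q ->
        inS2 pNS P Q /\
        exists r : R, 1 <= r /\ forall i, 0 < Q i -> Q i = r * P i))
  /\
  (forall Q : I -> R, is_minimizer pNS P Q ->
     forall i j, P i < P j -> 0 < Q i -> 0 < Q j /\ Q i < Q j).
Proof.
have [Ts [sTs nTs feas opt]] := exists_opt.
have [cS cM] := cand_inS sTs nTs.
set Qs := cand Ts.
have Qsmin : forall Q', inS P Q' -> KLb pNS P Qs <= KLb pNS P Q'.
  move=> Q' HQ'; apply: le_trans (cand_le sTs nTs) _.
  exact: le_trans (opt _ (TQ_sub HQ')) (f_le_KLb HQ').
have Qspos : forall j, 0 < Qs j -> pNS < Qs j.
  move=> j; rewrite /Qs /cand; case: ifP => jT; last by rewrite ltxx.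
  by move=> _; exact: feas.
have QsS2 : inS2 pNS P Qs by split=> //; split.
have QsM : is_minimizer pNS P Qs by split.
have char2 : forall Q : I -> R, is_minimizer pNS P Q ->
    inS2 pNS P Q /\
    exists r : R, 1 <= r /\ forall i, 0 < Q i -> Q i = r * P i.
  move=> Q QM; have [nT off prop mQ] := min_char QM.
  have inT : forall k, 0 < Q k -> k \in TQ Q.
    move=> k Qk; apply/negPn/negP => kT; move: Qk; by rewrite off // ltxx.
  split.
    split; first exact: QM.1.
    split=> // k /inT; by rewrite inE.
  exists (M / PA (TQ Q)); split.
    have A0 := PA_gt0 (TQ_sub QM.1) nT.
    by rewrite ler_pdivlMr // mul1r PA_leM.
  by move=> k /inT; exact: prop.
split; [split; [|split] | split; [split|]].
- move=> Q1 HQ1 [i /andP [Qi0 Qi]]; exists Qs; split=> //; split=> //.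
  rewrite ltNge; apply/negP => h.
  have Q1M : is_minimizer pNS P Q1.
    by split=> // Q' HQ'; exact: le_trans h (Qsmin _ HQ').
  have [_ off _ _] := min_char Q1M.
  have : i \notin TQ Q1 by rewrite inE -leNgt.
  by move/off => e; move: Qi0; rewrite e ltxx.
- by move=> Q1 HQ1; exists Qs; split => //; exact: Qsmin.
- by exists Qs.
- by exists Qs.
- exact: char2.
- move=> Q QM i j hij Qi0.
  have [nT off prop mQ] := min_char QM.
  have [[_ [_ pos]] _] := char2 Q QM.
  have iT : i \in TQ Q by rewrite inE pos.
  have A0 := PA_gt0 (TQ_sub QM.1) nT.
  have r0 : 0 < M / PA (TQ Q) by rewrite divr_gt0 // M_gt0.
  case: (boolP (j \in TQ Q)) => jT.
    rewrite (prop _ jT) (prop _ iT) ltr_pM2l // hij; split=> //.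
    by rewrite mulr_gt0 //; apply: le_lt_trans hij; exact: P_ge0.
  exfalso; apply: (swap_contra QM hij (pos _ Qi0)); exact: off.
Qed.

End Main.


Theorem lemma8 (R : realType) (I : finType) (pNS : R) (P : I -> R) :
  0 < pNS < 1 -> semidist P -> pNS < mass P ->
  (* (1) *)
  ((forall Q1 : I -> R, inS P Q1 -> (exists i, 0 < Q1 i <= pNS) ->
      exists Q2 : I -> R, inS P Q2 /\ (forall j, 0 < Q2 j -> pNS < Q2 j) /\
        KLb pNS P Q2 < KLb pNS P Q1)
   /\ (forall Q1 : I -> R, inS P Q1 ->
        exists Q2 : I -> R, inS2 pNS P Q2 /\ KLb pNS P Q2 <= KLb pNS P Q1)
   /\ (exists Q : I -> R, inS2 pNS P Q))
  /\
  (* (2) *)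
  ((exists Q : I -> R, is_minimizer pNS P Q)
   /\ (forall Q : I -> R, is_minimizer pNS P Q ->
        inS2 pNS P Q /\
        exists r : R, 1 <= r /\ forall i, 0 < Q i -> Q i = r * P i))
  /\
  (* (3) *)
  (forall Q : I -> R, is_minimizer pNS P Q ->
     forall i j, P i < P j -> 0 < Q i -> 0 < Q j /\ Q i < Q j).
Proof.
move=> /andP [hp0 hp1] hP hM.
exact: main_sec.
Qed.
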